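(* Let $\mathbf{A}\in\mathbb{R}^{m\times n}$ have rows $\mathbf{a}_1^\mathsf{T},\dots,\mathbf{a}_m^\mathsf{T}$, let $\lambda>\max_l\|\mathbf{a}_l\|_\infty$, and consider $$\text{(P}_\lambda\text{)}\quad \min_{\boldsymbol{x}\in[-1,1]^n}\ \max_{l\in\{1,\dots,m\}}\mathbf{a}_l^\mathsf{T}\boldsymbol{x}-\lambda\|\boldsymbol{x}\|_1.$$ Then every local minimizer of (P$_\lambda$) belongs to $\{-1,1\}^n$. Conversely, every point of $\{-1,1\}^n$ is a local minimizer of (P$_\lambda$).
   Context: A local minimizer of (P$_\lambda$) is a point $\bar{\boldsymbol{x}}\in[-1,1]^n$ such that for some $\epsilon>0$ the objective at $\bar{\boldsymbol{x}}$ is no larger than at every $\boldsymbol{x}\in[-1,1]^n$ with $\|\boldsymbol{x}-\bar{\boldsymbol{x}}\|_2\le\epsilon$. *)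

(* Defs.v *)
From HB Require Import structures.
From mathcomp Require Import all_boot all_order all_algebra.
From mathcomp Require Import reals.
Set Implicit Arguments. Unset Strict Implicit. Unset Printing Implicit Defensive.
Import Order.TTheory GRing.Theory Num.Theory.
Local Open Scope ring_scope.

Section Defs.
Variable R : realType.

Definition rowdot m n (A : 'M[R]_(m, n)) (l : 'I_m) (x : 'I_n -> R) : R :=
  \sum_(j < n) A l j * x j.

(* max_{l in 1..m+1} a_l^T x  (m.+1 rows, so the max is over a nonempty set) *)
Definition maxrow m n (A : 'M[R]_(m.+1, n)) (x : 'I_n -> R) : R :=
  \big[Num.max/rowdot A ord0 x]_(l < m.+1) rowdot A l x.

Definition rownorm_inf m n (A : 'M[R]_(m, n)) (l : 'I_m) : R :=
  \big[Num.max/0]_(j < n) `|A l j|.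

Definition norm1 n (x : 'I_n -> R) : R := \sum_(j < n) `|x j|.

Definition norm2 n (x : 'I_n -> R) : R := Num.sqrt (\sum_(j < n) x j ^+ 2).

Definition in_box n (x : 'I_n -> R) : Prop := forall j, -1 <= x j <= 1.

Definition objP m n (A : 'M[R]_(m.+1, n)) (lam : R) (x : 'I_n -> R) : R :=
  maxrow A x - lam * norm1 x.

Definition local_minimizer m n (A : 'M[R]_(m.+1, n)) (lam : R) (xb : 'I_n -> R)
  : Prop :=
  in_box xb /\
  exists eps : R, 0 < eps /\
    forall x : 'I_n -> R, in_box x -> norm2 (fun j => x j - xb j) <= eps ->
      objP A lam xb <= objP A lam x.

Definition is_sign_vector n (x : 'I_n -> R) : Prop :=
  forall j, x j = -1 \/ x j = 1.
End Defs.

(* Main.v *)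
Require Import Defs.
From HB Require Import structures.
From mathcomp Require Import all_boot all_order all_algebra.
From mathcomp Require Import reals lra.
Import Order.TTheory GRing.Theory Num.Theory.
Local Open Scope ring_scope.
Set Implicit Arguments.

Section H.
Variable R : realType.

Lemma sum_off n (F G : 'I_n -> R) j :
  (forall k, k != j -> F k = G k) ->
  \sum_(k < n) F k = \sum_(k < n) G k + (F j - G j).
Proof.
move=> H; rewrite (bigD1 j) //= [in RHS](bigD1 j) //=.
rewrite (eq_bigr G); last by move=> k /H.
lra.
Qed.

Lemma sq_le_sum n (F : 'I_n -> R) j : F j ^+ 2 <= \sum_(k < n) F k ^+ 2.
Proof.
rewrite (bigD1 j) //= lerDl; apply: sumr_ge0 => k _; exact: sqr_ge0.
Qed.

Lemma absA_lt m n (A : 'M[R]_(m.+1, n)) lam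
  (hlam : forall l : 'I_m.+1, rownorm_inf A l < lam) l k : `|A l k| < lam.
Proof.
apply: le_lt_trans (hlam l).
rewrite /rownorm_inf; exact: (le_bigmax _ (fun j => `|A l j|)).
Qed.

Lemma part2 m n (A : 'M[R]_(m.+1, n)) lam
  (hlam : forall l : 'I_m.+1, rownorm_inf A l < lam) xb :
  is_sign_vector xb -> local_minimizer A lam xb.
Proof.
move=> hs; split.
  by move=> j; case: (hs j) => ->; lra.
exists 1; split; first lra.
move=> x hx hd.
have hd2 : forall k, (x k - xb k) ^+ 2 <= 1.
  move=> k; have hk := sq_le_sum (fun j => x j - xb j) k.
  have hs1 : \sum_(j < n) (x j - xb j) ^+ 2 <= 1.
    by move: hd; rewrite /norm2 -{1}sqrtr1 ler_sqrt.
  simpl in hk; lra.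
have key : forall l k, A l k * xb k <= A l k * x k + lam * (`|xb k| - `|x k|).
  move=> l k; have hA := @absA_lt m n A lam hlam l k.
  have h1 := ler_norm (A l k); have h2 := ler_norm (- A l k); rewrite normrN in h2.
  have /andP [hx1 hx2] := hx k; have := hd2 k.
  case: (hs k) => ->; case: (lerP 0 (x k)) => hxk.
  - rewrite (ger0_norm hxk); move=> h; rewrite normrN normr1; nra.
  - rewrite (ltr0_norm hxk); move=> h; rewrite normrN normr1; nra.
  - rewrite (ger0_norm hxk); move=> h; rewrite normr1; nra.
  - rewrite (ltr0_norm hxk); move=> h; rewrite normr1; nra.
have row : forall l, rowdot A l xb <= rowdot A l x + lam * (norm1 xb - norm1 x).
  move=> l; rewrite /rowdot /norm1 -sumrB mulr_sumr -big_split /=.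
  by apply: ler_sum => k _; apply: key.
have hmax : maxrow A xb <= maxrow A x + lam * (norm1 xb - norm1 x).
  apply/bigmax_leP; split.
    apply: le_trans (row _) _; rewrite lerD2r; exact: (le_bigmax _ (fun l => rowdot A l x)).
  move=> l _; apply: le_trans (row _) _; rewrite lerD2r; exact: (le_bigmax _ (fun l => rowdot A l x)).
rewrite /objP; lra.
Qed.

Lemma part1 m n (A : 'M[R]_(m.+1, n)) lam
  (hlam : forall l : 'I_m.+1, rownorm_inf A l < lam) xb :
  local_minimizer A lam xb -> is_sign_vector xb.
Proof.
move=> [hbox [eps [he hloc]]] j.
have /andP[lo hi] := hbox j.
case: (eqVneq (xb j) (-1)) => [->|h1]; first by left.
case: (eqVneq (xb j) 1) => [->|h2]; first by right.
exfalso.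
have lo' : -1 < xb j by rewrite lt_def h1 lo.
have hi' : xb j < 1 by rewrite lt_def eq_sym h2 hi.
pose s : R := if 0 <= xb j then 1 else -1.
pose t : R := Num.min eps (1 - `|xb j|).
have ht0 : 0 < t.
  rewrite lt_min he /= subr_gt0 ltr_norml; apply/andP; split => //.
have hte : t <= eps by rewrite ge_min lexx.
have ht1 : t <= 1 - `|xb j| by rewrite ge_min lexx orbT.
have hst : `|xb j + s * t| = `|xb j| + t /\ -1 <= xb j + s * t <= 1.
  rewrite /s; case: (lerP 0 (xb j)) => hx.
    rewrite mul1r (ger0_norm hx) in ht1 *; rewrite ger0_norm; last lra.
    split => //; apply/andP; split; lra.
  rewrite (ltr0_norm hx) in ht1 *; rewrite ltr0_norm; last lra.
  split; first lra. apply/andP; split; lra.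
case: hst => hn hb.
pose x := fun k => if k == j then xb j + s * t else xb k.
have xoff : forall k, k != j -> x k = xb k by move=> k /negbTE; rewrite /x => ->.
have xj : x j = xb j + s * t by rewrite /x eqxx.
have hs2 : s ^+ 2 = 1 by rewrite /s; case: ifP => _; rewrite ?sqrrN expr1n.
have := hloc x.
have hbx : in_box x.
  by move=> k; rewrite /x; case: eqP => _ //; apply: hbox.
have hn2 : norm2 (fun k => x k - xb k) <= eps.
  rewrite /norm2 (@sum_off n _ (fun _ => 0) j); last first.
    by move=> k hk; rewrite xoff // subrr expr0n.
  rewrite big1 // xj subr0 add0r addrC addKr exprMn hs2 mul1r sqrtr_sqr.
  by rewrite ger0_norm // ltW.
move=> /(_ hbx hn2).
have hn1 : norm1 x = norm1 xb + t.
  rewrite /norm1 (@sum_off n _ (fun k => `|xb k|) j); last first.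
    by move=> k hk; rewrite xoff.
  rewrite xj hn; lra.
have hrow : forall l, rowdot A l x < maxrow A xb + lam * t.
  move=> l; rewrite /rowdot (@sum_off n _ (fun k => A l k * xb k) j); last first.
    by move=> k hk; rewrite xoff.
  have hA := @absA_lt m n A lam hlam l j.
  have ha1 := ler_norm (A l j); have ha2 := ler_norm (- A l j); rewrite normrN in ha2.
  have hm : \sum_(k < n) A l k * xb k <= maxrow A xb.
    exact: (le_bigmax _ (fun l => rowdot A l xb)).
  rewrite xj; have hsv : s = 1 \/ s = -1 by rewrite /s; case: ifP; [left|right].
  case: hsv => ->; nra.
have hmax : maxrow A x < maxrow A xb + lam * t.
  apply/bigmax_ltP; split; first exact: hrow.
  by move=> l _; apply: hrow.
rewrite /objP hn1; lra.
Qed.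
End H.

Theorem theorem4 (R : realType) (m n : nat) (A : 'M[R]_(m.+1, n)) (lam : R)
  (hlam : forall l : 'I_m.+1, rownorm_inf A l < lam) :
  (forall xb : 'I_n -> R, local_minimizer A lam xb -> is_sign_vector xb) /\
  (forall xb : 'I_n -> R, is_sign_vector xb -> local_minimizer A lam xb).
Proof.
split => xb.
  exact: (@part1 R m n A lam hlam xb).
exact: (@part2 R m n A lam hlam xb).
Qed.
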